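(* Let $B\colon\mathsf{Set}\to\mathsf{Set}$ be countably accessible. Suppose $(T_c,\eta^c,\mu^c)$ is a monad on $\mathsf{cSet}$ which lifts to a monad $(\overline{T}_c,\overline{\eta}^c,\overline{\mu}^c)$ on $\mathsf{Coalg}_c(B)$. Then: (1) $(T_c,\eta^c,\mu^c)$ extends to a monad $(T,\eta,\mu)$ on $\mathsf{Set}$ along the inclusion $I\colon\mathsf{cSet}\to\mathsf{Set}$; (2) $(\overline{T}_c,\overline{\eta}^c,\overline{\mu}^c)$ extends to a monad $(\overline{T},\overline{\eta},\overline{\mu})$ on $\mathsf{Coalg}(B)$ along the inclusion $\overline{I}\colon\mathsf{Coalg}_c(B)\to\mathsf{Coalg}(B)$; (3) $(\overline{T},\overline{\eta},\overline{\mu})$ is a lifting up to isomorphism of $(T,\eta,\mu)$.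
   Context: A functor $B\colon\mathsf{Set}\to\mathsf{Set}$ is countably accessible if for every set $X$ and every $x\in BX$ there are a countable set $Y$, an injective function $i\colon Y\to X$ and $y\in BY$ with $Bi(y)=x$. $\mathsf{cSet}$ is the full subcategory of countable sets; $\mathsf{Coalg}(B)$ is the category of $B$-coalgebras $c\colon X\to BX$ and homomorphisms ($h$ with $Bh\circ c=d\circ h$), and $\mathsf{Coalg}_c(B)$ its full subcategory of coalgebras with countable carrier. A monad $(T,\eta,\mu)$ on a category $\mathcal D$ extends a monad $(T_c,\eta^c,\mu^c)$ on a full subcategory $J\colon\mathcal{D}_c\to\mathcal D$ along $J$ if there is a natural isomorphism $\alpha\colon JT_c\Rightarrow TJ$ with $\alpha\circ J\eta^c=\eta J$ and $\alpha\circ J\mu^c=\mu J\circ T\alpha\circ\alpha T_c$. A monad $(\overline T,\overline\eta,\overline\mu)$ on a category of coalgebras with forgetful functor $U$ lifts a monad $(T,\eta,\mu)$ on the base category if $U\overline T=TU$, $U\overline\eta=\eta U$, $U\overline\mu=\mu U$; it is a lifting up to isomorphism if there is a natural isomorphism $\alpha\colon U\overline{T}\Rightarrow TU$ with $\alpha\circ U\overline{\eta}=\eta U$ and $\alpha\circ U\overline{\mu}=\mu U\circ T\alpha\circ\alpha\overline{T}$. *)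

(* Defs.v *)
Definition injective {X Y : Type} (f : X -> Y) : Prop :=
  forall a b, f a = f b -> a = b.

Definition countable (X : Type) : Prop := exists f : X -> nat, injective f.

Definition is_iso {X Y : Type} (f : X -> Y) : Prop :=
  exists g : Y -> X, (forall x, g (f x) = x) /\ (forall y, f (g y) = y).

Record Functor := {
  F_obj :> Type -> Type;
  F_map : forall X Y : Type, (X -> Y) -> F_obj X -> F_obj Y;
  F_id : forall X (x : F_obj X), F_map X X (fun a : X => a) x = x;
  F_comp : forall X Y Z (f : X -> Y) (g : Y -> Z) (x : F_obj X),
      F_map Y Z g (F_map X Y f x) = F_map X Z (fun a => g (f a)) x
}.
Arguments F_map _ {X Y} _ _.

Definition countably_accessible (B : Functor) : Prop :=
  forall (X : Type) (x : B X), exists (Y : Type) (i : Y -> X),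
    countable Y /\ injective i /\ exists y : B Y, F_map B i y = x.

Record Monad := {
  mT :> Type -> Type;
  mT_map : forall X Y : Type, (X -> Y) -> mT X -> mT Y;
  mT_id : forall X (t : mT X), mT_map X X (fun a : X => a) t = t;
  mT_comp : forall X Y Z (f : X -> Y) (g : Y -> Z) (t : mT X),
      mT_map Y Z g (mT_map X Y f t) = mT_map X Z (fun a => g (f a)) t;
  m_eta : forall X : Type, X -> mT X;
  m_mu : forall X : Type, mT (mT X) -> mT X;
  m_eta_nat : forall X Y (f : X -> Y) (x : X), m_eta Y (f x) = mT_map X Y f (m_eta X x);
  m_mu_nat : forall X Y (f : X -> Y) (t : mT (mT X)),
      m_mu Y (mT_map (mT X) (mT Y) (mT_map X Y f) t) = mT_map X Y f (m_mu X t);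
  m_unit_l : forall X (t : mT X), m_mu X (m_eta (mT X) t) = t;
  m_unit_r : forall X (t : mT X), m_mu X (mT_map X (mT X) (m_eta X) t) = t;
  m_assoc : forall X (t : mT (mT (mT X))),
      m_mu X (m_mu (mT X) t) = m_mu X (mT_map (mT (mT X)) (mT X) (m_mu X) t)
}.
Arguments mT_map _ {X Y} _ _.
Arguments m_eta _ {X} _.
Arguments m_mu _ {X} _.

Record CSet := { cs_car :> Type; cs_cnt : countable cs_car }.

Record cMonad := {
  cT : CSet -> CSet;
  cT_map : forall X Y : CSet, (X -> Y) -> cT X -> cT Y;
  cT_id : forall (X : CSet) (t : cT X), cT_map X X (fun a : X => a) t = t;
  cT_comp : forall (X Y Z : CSet) (f : X -> Y) (g : Y -> Z) (t : cT X),
      cT_map Y Z g (cT_map X Y f t) = cT_map X Z (fun a => g (f a)) t;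
  c_eta : forall X : CSet, X -> cT X;
  c_mu : forall X : CSet, cT (cT X) -> cT X;
  c_eta_nat : forall (X Y : CSet) (f : X -> Y) (x : X),
      c_eta Y (f x) = cT_map X Y f (c_eta X x);
  c_mu_nat : forall (X Y : CSet) (f : X -> Y) (t : cT (cT X)),
      c_mu Y (cT_map (cT X) (cT Y) (cT_map X Y f) t) = cT_map X Y f (c_mu X t);
  c_unit_l : forall (X : CSet) (t : cT X), c_mu X (c_eta (cT X) t) = t;
  c_unit_r : forall (X : CSet) (t : cT X), c_mu X (cT_map X (cT X) (c_eta X) t) = t;
  c_assoc : forall (X : CSet) (t : cT (cT (cT X))),
      c_mu X (c_mu (cT X) t) = c_mu X (cT_map (cT (cT X)) (cT X) (c_mu X) t)
}.
Arguments cT_map _ {X Y} _ _.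
Arguments c_eta _ {X} _.
Arguments c_mu _ {X} _.

Record Coalg (B : Functor) := { car : Type; str : car -> B car }.
Arguments car {B} _.
Arguments str {B} _ _.

Definition is_hom {B : Functor} {X Y : Type} (c : X -> B X) (d : Y -> B Y)
  (h : X -> Y) : Prop := forall x, F_map B h (c x) = d (h x).

Record CHom {B : Functor} (C D : Coalg B) := {
  hfun :> car C -> car D;
  hhom : is_hom (str C) (str D) hfun
}.
Arguments hfun {B C D} _ _.
Arguments hhom {B C D} _ _.

Lemma id_is_hom (B : Functor) (C : Coalg B) :
  is_hom (str C) (str C) (fun a => a).
Proof. intro x. apply F_id. Qed.

Definition chom_id (B : Functor) (C : Coalg B) : CHom C C :=
  {| hfun := fun a => a; hhom := @id_is_hom B C |}.

Lemma comp_is_hom (B : Functor) (C D E : Coalg B) (f : CHom C D) (g : CHom D E) :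
  is_hom (str C) (str E) (fun a => g (f a)).
Proof.
  intro x. rewrite <- F_comp. rewrite (hhom f x). apply (hhom g).
Qed.

Definition chom_comp (B : Functor) (C D E : Coalg B) (g : CHom D E) (f : CHom C D)
  : CHom C E := {| hfun := fun a => g (f a); hhom := @comp_is_hom B C D E f g |}.

Record CoalgMonad (B : Functor) := {
  bT : Coalg B -> Coalg B;
  bT_map : forall C D : Coalg B, CHom C D -> CHom (bT C) (bT D);
  bT_id : forall (C : Coalg B) (t : car (bT C)), bT_map C C (chom_id B C) t = t;
  bT_comp : forall (C D E : Coalg B) (f : CHom C D) (g : CHom D E) (t : car (bT C)),
      bT_map D E g (bT_map C D f t) = bT_map C E (chom_comp B C D E g f) t;
  b_eta : forall C : Coalg B, CHom C (bT C);
  b_mu : forall C : Coalg B, CHom (bT (bT C)) (bT C);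
  b_eta_nat : forall (C D : Coalg B) (f : CHom C D) (x : car C),
      b_eta D (f x) = bT_map C D f (b_eta C x);
  b_mu_nat : forall (C D : Coalg B) (f : CHom C D) (t : car (bT (bT C))),
      b_mu D (bT_map (bT C) (bT D) (bT_map C D f) t) = bT_map C D f (b_mu C t);
  b_unit_l : forall (C : Coalg B) (t : car (bT C)), b_mu C (b_eta (bT C) t) = t;
  b_unit_r : forall (C : Coalg B) (t : car (bT C)), b_mu C (bT_map C (bT C) (b_eta C) t) = t;
  b_assoc : forall (C : Coalg B) (t : car (bT (bT (bT C)))),
      b_mu C (b_mu (bT C) t) = b_mu C (bT_map (bT (bT C)) (bT C) (b_mu C) t)
}.
Arguments bT {B} _ _.
Arguments bT_map {B} _ {C D} _.
Arguments b_eta {B} _ _.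
Arguments b_mu {B} _ _.

Record CCoalg (B : Functor) := { cc_car : CSet; cc_str : cc_car -> B cc_car }.
Arguments cc_car {B} _.
Arguments cc_str {B} _ _.

Definition Ibar {B : Functor} (C : CCoalg B) : Coalg B :=
  {| car := cs_car (cc_car C); str := cc_str C |}.

(* A (strict) lifting of the monad M on cSet to Coalg_c(B): U Tbar = T U,
   U etabar = eta U, U mubar = mu U.  Concretely Tbar(X,c) = (T X, lstr (X,c)),
   Tbar h = T h, etabar = eta, mubar = mu; these must be coalgebra
   homomorphisms.  The monad laws of Tbar are then those of M. *)
Record cLifting (B : Functor) (M : cMonad) := {
  lstr : forall C : CCoalg B, cT M (cc_car C) -> B (cT M (cc_car C));
  lmap_hom : forall (C D : CCoalg B) (h : cc_car C -> cc_car D),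
      is_hom (cc_str C) (cc_str D) h -> is_hom (lstr C) (lstr D) (cT_map M h);
  leta_hom : forall C : CCoalg B, is_hom (cc_str C) (lstr C) (@c_eta M (cc_car C));
  lmu_hom : forall C : CCoalg B,
      is_hom (lstr {| cc_car := cT M (cc_car C); cc_str := lstr C |}) (lstr C)
             (@c_mu M (cc_car C))
}.
Arguments lstr {B M} _ _ _.

Definition Tbarc {B : Functor} {M : cMonad} (L : cLifting B M) (C : CCoalg B)
  : CCoalg B := {| cc_car := cT M (cc_car C); cc_str := lstr L C |}.

Definition extends_set (M : cMonad) (N : Monad) : Prop :=
  exists alpha : forall X : CSet, cT M X -> N X,
    (forall X, is_iso (alpha X)) /\
    (forall (X Y : CSet) (f : X -> Y) (t : cT M X),
        alpha Y (cT_map M f t) = mT_map N f (alpha X t)) /\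
    (forall (X : CSet) (x : X), alpha X (c_eta M x) = m_eta N x) /\
    (forall (X : CSet) (t : cT M (cT M X)),
        alpha X (c_mu M t) = m_mu N (mT_map N (alpha X) (alpha (cT M X) t))).

Definition extends_coalg {B : Functor} {M : cMonad} (L : cLifting B M)
  (P : CoalgMonad B) : Prop :=
  exists alpha : forall C : CCoalg B, CHom (Ibar (Tbarc L C)) (bT P (Ibar C)),
    (forall C, exists inv : CHom (bT P (Ibar C)) (Ibar (Tbarc L C)),
        (forall x, inv (alpha C x) = x) /\ (forall y, alpha C (inv y) = y)) /\
    (forall (C D : CCoalg B) (h : CHom (Ibar C) (Ibar D)) (t : cT M (cc_car C)),
        alpha D (cT_map M (hfun h) t) = bT_map P h (alpha C t)) /\
    (forall (C : CCoalg B) (x : cc_car C),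
        alpha C (c_eta M x) = b_eta P (Ibar C) x) /\
    (forall (C : CCoalg B) (t : cT M (cT M (cc_car C))),
        alpha C (c_mu M t)
        = b_mu P (Ibar C) (bT_map P (alpha C) (alpha (Tbarc L C) t))).

Definition lifts_upto_iso {B : Functor} (N : Monad) (P : CoalgMonad B) : Prop :=
  exists alpha : forall C : Coalg B, car (bT P C) -> N (car C),
    (forall C, is_iso (alpha C)) /\
    (forall (C D : Coalg B) (h : CHom C D) (t : car (bT P C)),
        alpha D (bT_map P h t) = mT_map N (hfun h) (alpha C t)) /\
    (forall (C : Coalg B) (x : car C), alpha C (b_eta P C x) = m_eta N x) /\
    (forall (C : Coalg B) (t : car (bT P (bT P C))),
        alpha C (b_mu P C t) = m_mu N (mT_map N (alpha C) (alpha (bT P C) t))).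

(* Main.v *)
Require Import Defs.
From Stdlib Require Import ClassicalEpsilon FunctionalExtensionality ProofIrrelevance Classical PropExtensionality Cantor.

Section Ext.
Context (M : cMonad).

Definition Mem {X : Type} (s : nat -> option X) (x : X) : Prop := exists n, s n = Some x.
Definition Incl {X : Type} (s s' : nat -> option X) : Prop := forall x, Mem s x -> Mem s' x.

Lemma sub_eq {X : Type} (P : X -> Prop) (p1 p2 : {x | P x}) :
  proj1_sig p1 = proj1_sig p2 -> p1 = p2.
Proof. destruct p1, p2; simpl; intros ->; f_equal; apply proof_irrelevance. Qed.

Lemma sub_countable {X : Type} (s : nat -> option X) : countable {x | Mem s x}.
Proof.
  exists (fun p : {x | Mem s x} => proj1_sig (constructive_indefinite_description
     (fun n => s n = Some (proj1_sig p)) (proj2_sig p))).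
  intros a b E.
  destruct (constructive_indefinite_description _ (proj2_sig a)) as [na Ha].
  destruct (constructive_indefinite_description _ (proj2_sig b)) as [nb Hb].
  simpl in E; subst. apply sub_eq. rewrite Ha in Hb. congruence.
Qed.

Definition CS {X : Type} (s : nat -> option X) : CSet :=
  Build_CSet {x | Mem s x} (sub_countable s).

Definition inj {X : Type} {s s' : nat -> option X} (H : Incl s s') (p : CS s) : CS s' :=
  exist _ (proj1_sig p) (H _ (proj2_sig p)).

Definition Tm {A B : CSet} (f : A -> B) (t : cT M A) : cT M B := cT_map M f t.

Lemma Tm_ext {Z : CSet} {X : Type} (s' : nat -> option X) (h1 h2 : Z -> CS s') t :
  (forall z, proj1_sig (h1 z) = proj1_sig (h2 z)) -> Tm h1 t = Tm h2 t.
Proof.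
  intro H. unfold Tm. f_equal. extensionality z. apply sub_eq, H.
Qed.

Lemma Tm_comp {A B C : CSet} (f : A -> B) (g : B -> C) t :
  Tm g (Tm f t) = Tm (fun a => g (f a)) t.
Proof. apply cT_comp. Qed.

Lemma Tm_id {A : CSet} (t : cT M A) : Tm (fun a => a) t = t.
Proof. apply cT_id. Qed.

Lemma Tm_coh {Z B : CSet} {X : Type} (s' : nat -> option X) (f : Z -> B) (g : B -> CS s')
  (h : Z -> CS s') t :
  (forall z, proj1_sig (g (f z)) = proj1_sig (h z)) -> Tm g (Tm f t) = Tm h t.
Proof. intro H. rewrite Tm_comp. apply Tm_ext, H. Qed.

Definition bigU {X : Type} (ss : nat -> nat -> option X) : nat -> option X :=
  fun n => let (a, b) := of_nat n in ss a b.

Lemma bigU_incl {X : Type} (ss : nat -> nat -> option X) k : Incl (ss k) (bigU ss).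
Proof.
  intros x [m Hm]. exists (to_nat (k, m)). unfold bigU. rewrite cancel_of_to. exact Hm.
Qed.

Definition union {X : Type} (s1 s2 : nat -> option X) : nat -> option X :=
  bigU (fun k => match k with 0 => s1 | _ => s2 end).

Lemma union_l {X : Type} (s1 s2 : nat -> option X) : Incl s1 (union s1 s2).
Proof. exact (bigU_incl (fun k => match k with 0 => s1 | _ => s2 end) 0). Qed.
Lemma union_r {X : Type} (s1 s2 : nat -> option X) : Incl s2 (union s1 s2).
Proof. exact (bigU_incl (fun k => match k with 0 => s1 | _ => s2 end) 1). Qed.

Lemma Incl_refl {X : Type} (s : nat -> option X) : Incl s s.
Proof. intros x H; exact H. Qed.
Lemma Incl_trans {X : Type} (s1 s2 s3 : nat -> option X) : Incl s1 s2 -> Incl s2 s3 -> Incl s1 s3.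
Proof. intros H1 H2 x H; auto. Qed.

Definition Rep (X : Type) := {s : nat -> option X & cT M (CS s)}.

Definition R {X : Type} (r1 r2 : Rep X) : Prop :=
  exists s3 (H1 : Incl (projT1 r1) s3) (H2 : Incl (projT1 r2) s3),
    Tm (inj H1) (projT2 r1) = Tm (inj H2) (projT2 r2).

Lemma R_refl {X : Type} (r : Rep X) : R r r.
Proof. exists (projT1 r), (Incl_refl _), (Incl_refl _). reflexivity. Qed.

Lemma R_sym {X : Type} (r1 r2 : Rep X) : R r1 r2 -> R r2 r1.
Proof. intros (s3 & H1 & H2 & E). exists s3, H2, H1. auto. Qed.

Lemma R_trans {X : Type} (r1 r2 r3 : Rep X) : R r1 r2 -> R r2 r3 -> R r1 r3.
Proof.
  intros (s4 & H1 & H2 & E) (s5 & H2' & H3 & E').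
  set (W := union s4 s5).
  exists W, (Incl_trans _ _ _ H1 (union_l s4 s5)), (Incl_trans _ _ _ H3 (union_r s4 s5)).
  transitivity (Tm (inj (union_l s4 s5)) (Tm (inj H1) (projT2 r1))).
  { symmetry. apply Tm_coh. reflexivity. }
  rewrite E.
  transitivity (Tm (inj (union_r s4 s5)) (Tm (inj H2') (projT2 r2))).
  { rewrite !Tm_comp. apply Tm_ext. reflexivity. }
  rewrite E'. apply Tm_coh. reflexivity.
Qed.

Definition N (X : Type) : Type := {P : Rep X -> Prop | exists r, P = R r}.

Definition cls {X : Type} (r : Rep X) : N X := exist _ (R r) (ex_intro _ r eq_refl).
Definition cl {X : Type} (s : nat -> option X) (t : cT M (CS s)) : N X := cls (existT _ s t).

Lemma cls_eq {X : Type} (r1 r2 : Rep X) : R r1 r2 -> cls r1 = cls r2.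
Proof.
  intro H. apply sub_eq. simpl. extensionality r. apply propositional_extensionality.
  split; intro H'.
  - apply R_trans with r1; auto using R_sym.
  - apply R_trans with r2; auto.
Qed.

Lemma cls_eq_inv {X : Type} (r1 r2 : Rep X) : cls r1 = cls r2 -> R r1 r2.
Proof.
  intro E. assert (E' : R r1 = R r2) by exact (f_equal (@proj1_sig _ _) E).
  rewrite E'. apply R_refl.
Qed.

Lemma N_ind {X : Type} (q : N X) : exists s t, q = cl s t.
Proof.
  destruct q as [P [[s t] E]]. exists s, t. apply sub_eq. simpl. exact E.
Qed.

Definition rep {X : Type} (q : N X) : Rep X :=
  proj1_sig (constructive_indefinite_description _ (proj2_sig q)).

Lemma rep_spec {X : Type} (q : N X) : cls (rep q) = q.
Proof.
  unfold rep. destruct (constructive_indefinite_description _ (proj2_sig q)) as [r E].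
  simpl. apply sub_eq. simpl. symmetry; exact E.
Qed.

Definition liftN {X A : Type} (g : Rep X -> A) (q : N X) : A := g (rep q).

Lemma liftN_cls {X A : Type} (g : Rep X -> A) (Hg : forall r1 r2, R r1 r2 -> g r1 = g r2) r :
  liftN g (cls r) = g r.
Proof.
  unfold liftN. apply Hg. apply cls_eq_inv. apply rep_spec.
Qed.

Lemma cl_eq_map {Z : CSet} {X : Type} (s1 s2 : nat -> option X) (h1 : Z -> CS s1)
  (h2 : Z -> CS s2) (t : cT M Z) :
  (forall z, proj1_sig (h1 z) = proj1_sig (h2 z)) -> cl s1 (Tm h1 t) = cl s2 (Tm h2 t).
Proof.
  intro H. apply cls_eq. exists (union s1 s2), (union_l s1 s2), (union_r s1 s2). simpl.
  transitivity (Tm (fun z => inj (union_l s1 s2) (h1 z)) t).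
  - apply Tm_coh; reflexivity.
  - symmetry. apply Tm_coh. intro z. simpl. symmetry. apply H.
Qed.

Lemma cl_inj {X : Type} (s s' : nat -> option X) (H : Incl s s') t :
  cl s' (Tm (inj H) t) = cl s t.
Proof.
  rewrite <- (Tm_id t) at 2. apply cl_eq_map. reflexivity.
Qed.

Lemma cls_cl {X : Type} (r : Rep X) : cls r = cl (projT1 r) (projT2 r).
Proof. destruct r; reflexivity. Qed.

Definition fim {X Y : Type} (f : X -> Y) (s : nat -> option X) : nat -> option Y :=
  fun n => option_map f (s n).

Lemma fim_mem {X Y : Type} (f : X -> Y) (s : nat -> option X) x : Mem s x -> Mem (fim f s) (f x).
Proof. intros [n Hn]. exists n. unfold fim. rewrite Hn. reflexivity. Qed.

Definition fsub {X Y : Type} (f : X -> Y) (s : nat -> option X) (p : CS s) : CS (fim f s) :=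
  exist _ (f (proj1_sig p)) (fim_mem f s _ (proj2_sig p)).

Definition mapRep {X Y : Type} (f : X -> Y) (r : Rep X) : N Y :=
  cl (fim f (projT1 r)) (Tm (fsub f (projT1 r)) (projT2 r)).

Lemma mapRep_resp {X Y : Type} (f : X -> Y) r1 r2 : R r1 r2 -> mapRep f r1 = mapRep f r2.
Proof.
  intros (s3 & H1 & H2 & E). unfold mapRep.
  transitivity (cl (fim f s3) (Tm (fsub f s3) (Tm (inj H1) (projT2 r1)))).
  - rewrite Tm_comp. apply cl_eq_map. reflexivity.
  - rewrite E, Tm_comp. apply cl_eq_map. reflexivity.
Qed.

Definition mapN {X Y : Type} (f : X -> Y) (q : N X) : N Y := liftN (mapRep f) q.

Lemma map_cl {X Y : Type} (f : X -> Y) s t : mapN f (cl s t) = cl (fim f s) (Tm (fsub f s) t).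
Proof. unfold mapN, cl. rewrite liftN_cls. reflexivity. apply mapRep_resp. Qed.

Lemma map_char {X Y : Type} (f : X -> Y) (Z : CSet) s (h0 : Z -> CS s) t s'
  (h : Z -> CS s') :
  (forall z, proj1_sig (h z) = f (proj1_sig (h0 z))) -> mapN f (cl s (Tm h0 t)) = cl s' (Tm h t).
Proof.
  intro H. rewrite map_cl, Tm_comp. apply cl_eq_map. intro z. simpl. symmetry; apply H.
Qed.

Lemma map_id {X : Type} (q : N X) : mapN (fun a => a) q = q.
Proof.
  destruct (N_ind q) as (s & t & ->). rewrite <- (Tm_id t) at 1.
  rewrite (map_char _ _ s (fun a => a) t s (fun a => a)); [ | reflexivity]. now rewrite Tm_id.
Qed.

Lemma map_comp {X Y Z : Type} (f : X -> Y) (g : Y -> Z) (q : N X) :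
  mapN g (mapN f q) = mapN (fun a => g (f a)) q.
Proof.
  destruct (N_ind q) as (s & t & ->). rewrite map_cl.
  rewrite (map_char g _ _ (fsub f s) t (fim g (fim f s)) (fun p => fsub g _ (fsub f s p)))
    by reflexivity.
  rewrite <- (Tm_id t) at 2.
  rewrite (map_char _ _ s (fun a => a) t (fim g (fim f s)) (fun p => fsub g _ (fsub f s p)))
    by reflexivity.
  reflexivity.
Qed.

Definition single {X : Type} (x : X) : nat -> option X := fun _ => Some x.
Definition pt {X : Type} (x : X) : CS (single x) := exist _ x (ex_intro _ 0 eq_refl).
Definition etaN {X : Type} (x : X) : N X := cl (single x) (c_eta M (pt x)).

Lemma cl_eta {X : Type} (s : nat -> option X) (u : CS s) : cl s (c_eta M u) = etaN (proj1_sig u).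
Proof.
  unfold etaN.
  transitivity (cl s (Tm (fun _ : CS (single (proj1_sig u)) => u) (c_eta M (pt (proj1_sig u))))).
  { unfold Tm. rewrite <- c_eta_nat. reflexivity. }
  rewrite <- (Tm_id (c_eta M (pt (proj1_sig u)))) at 2.
  apply cl_eq_map. intro z. destruct z as [z [n Hz]]. simpl. unfold single in Hz. congruence.
Qed.

Lemma eta_nat {X Y : Type} (f : X -> Y) (x : X) : etaN (f x) = mapN f (etaN x).
Proof.
  unfold etaN at 2. rewrite map_cl. unfold Tm. rewrite <- c_eta_nat. symmetry. apply cl_eta.
Qed.

Lemma family {Z : CSet} {X : Type} (V1 V2 : nat -> option X) (a1 : Z -> cT M (CS V1))
  (a2 : Z -> cT M (CS V2)) :
  (forall z, cl V1 (a1 z) = cl V2 (a2 z)) ->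
  exists U (i1 : Incl V1 U) (i2 : Incl V2 U), forall z, Tm (inj i1) (a1 z) = Tm (inj i2) (a2 z).
Proof.
  intro H. destruct (cs_cnt Z) as [f Hf].
  assert (Hn : forall n, exists w, forall z, f z = n ->
     exists (j1 : Incl V1 w) (j2 : Incl V2 w), Tm (inj j1) (a1 z) = Tm (inj j2) (a2 z)).
  { intro n. destruct (classic (exists z, f z = n)) as [[z0 Hz0] | Hno].
    - destruct (cls_eq_inv _ _ (H z0)) as (w & j1 & j2 & E).
      exists w. intros z Hz. assert (z = z0) by (apply Hf; congruence). subst z.
      exists j1, j2. exact E.
    - exists V1. intros z Hz. exfalso. apply Hno. eauto. }
  pose (w := fun n => proj1_sig (constructive_indefinite_description _ (Hn n))).
  assert (Hw : forall z, exists (j1 : Incl V1 (w (f z))) (j2 : Incl V2 (w (f z))),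
     Tm (inj j1) (a1 z) = Tm (inj j2) (a2 z)).
  { intro z. unfold w. destruct (constructive_indefinite_description _ (Hn (f z))) as [w0 Hw0].
    simpl. apply Hw0. reflexivity. }
  set (U := union (union V1 V2) (bigU w)).
  exists U, (Incl_trans _ _ _ (union_l V1 V2) (union_l _ _)),
    (Incl_trans _ _ _ (union_r V1 V2) (union_l _ _)).
  intro z. destruct (Hw z) as (j1 & j2 & E).
  pose (k := Incl_trans _ _ _ (bigU_incl w (f z)) (union_r (union V1 V2) (bigU w))).
  transitivity (Tm (inj k) (Tm (inj j1) (a1 z))).
  - symmetry. apply Tm_coh. reflexivity.
  - rewrite E. apply Tm_coh. reflexivity.
Qed.

Definition ss {X : Type} (s : nat -> option (N X)) : nat -> nat -> option X :=
  fun n => match s n with Some q => projT1 (rep q) | None => fun _ => None end.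

Lemma repW {X : Type} (s : nat -> option (N X)) (q : N X) (H : Mem s q) :
  Incl (projT1 (rep q)) (bigU (ss s)).
Proof.
  intros x Hx. destruct H as [n Hn]. apply (bigU_incl (ss s) n). unfold ss. rewrite Hn. exact Hx.
Qed.

Definition kk {X : Type} (s : nat -> option (N X)) (p : CS s) : cT M (CS (bigU (ss s))) :=
  Tm (inj (repW s (proj1_sig p) (proj2_sig p))) (projT2 (rep (proj1_sig p))).

Lemma kk_spec {X : Type} (s : nat -> option (N X)) (p : CS s) :
  cl (bigU (ss s)) (kk s p) = proj1_sig p.
Proof. unfold kk. rewrite cl_inj, <- cls_cl. apply rep_spec. Qed.

Definition muRep {X : Type} (r : Rep (N X)) : N X :=
  cl (bigU (ss (projT1 r))) (c_mu M (Tm (kk (projT1 r)) (projT2 r))).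

Lemma mu_push {X : Type} (V U : nat -> option X) (i : Incl V U) (x : cT M (cT M (CS V))) :
  cl V (c_mu M x) = cl U (c_mu M (Tm (Tm (inj i)) x)).
Proof. unfold Tm at 1. rewrite c_mu_nat. symmetry. apply cl_inj. Qed.

Lemma muRep_char {X : Type} (Z : CSet) (s : nat -> option (N X)) (h : Z -> CS s) t0
  (V : nat -> option X) (g : Z -> cT M (CS V)) :
  (forall z, cl V (g z) = proj1_sig (h z)) ->
  muRep (existT _ s (Tm h t0)) = cl V (c_mu M (Tm g t0)).
Proof.
  intro H. unfold muRep; simpl. rewrite Tm_comp.
  destruct (family _ _ (fun z => kk s (h z)) g) as (U & i1 & i2 & E).
  { intro z. rewrite kk_spec. symmetry. apply H. }
  rewrite (mu_push _ _ i1), (mu_push _ _ i2), !Tm_comp.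
  f_equal. f_equal. unfold Tm at 1 3. f_equal. extensionality z. apply E.
Qed.

Lemma muRep_resp {X : Type} (r1 r2 : Rep (N X)) : R r1 r2 -> muRep r1 = muRep r2.
Proof.
  intros (s3 & H1 & H2 & E). destruct r1 as [s1 t1], r2 as [s2 t2]. simpl in *.
  rewrite <- (Tm_id t1), <- (Tm_id t2).
  rewrite (muRep_char _ _ _ _ _ (fun p => kk s3 (inj H1 p))).
  2:{ intro z. rewrite kk_spec. reflexivity. }
  rewrite (muRep_char _ _ _ _ _ (fun p => kk s3 (inj H2 p))).
  2:{ intro z. rewrite kk_spec. reflexivity. }
  rewrite <- (Tm_comp (inj H1) (kk s3) t1), <- (Tm_comp (inj H2) (kk s3) t2), E. reflexivity.
Qed.

Definition muN {X : Type} (q : N (N X)) : N X := liftN muRep q.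

Lemma mu_char {X : Type} (Z : CSet) (s : nat -> option (N X)) (h : Z -> CS s) t0
  (V : nat -> option X) (g : Z -> cT M (CS V)) :
  (forall z, cl V (g z) = proj1_sig (h z)) ->
  muN (cl s (Tm h t0)) = cl V (c_mu M (Tm g t0)).
Proof.
  intro H. unfold muN, cl. rewrite liftN_cls by apply muRep_resp. apply muRep_char, H.
Qed.

Lemma mu_char1 {X : Type} (s : nat -> option (N X)) t
  (V : nat -> option X) (g : CS s -> cT M (CS V)) :
  (forall z, cl V (g z) = proj1_sig z) -> muN (cl s t) = cl V (c_mu M (Tm g t)).
Proof. intro H. rewrite <- (Tm_id t) at 1. apply mu_char, H. Qed.

Lemma mu_exists {X : Type} (s : nat -> option (N X)) :
  exists V (g : CS s -> cT M (CS V)), forall z, cl V (g z) = proj1_sig z.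
Proof. exists (bigU (ss s)), (kk s). apply kk_spec. Qed.

Lemma mu_nat {X Y : Type} (f : X -> Y) (Q : N (N X)) :
  muN (mapN (mapN f) Q) = mapN f (muN Q).
Proof.
  destruct (N_ind Q) as (s & t & ->). destruct (mu_exists s) as (V & g & Hg).
  rewrite (mu_char1 s t V g Hg), map_cl, map_cl.
  rewrite (mu_char _ _ _ _ (fim f V) (fun z => Tm (fsub f V) (g z))).
  - unfold Tm at 3. rewrite <- c_mu_nat. rewrite <- Tm_comp. reflexivity.
  - intro z. simpl. rewrite <- map_cl, Hg. reflexivity.
Qed.

Lemma unit_l {X : Type} (q : N X) : muN (etaN q) = q.
Proof.
  destruct (N_ind q) as (s & t & ->). unfold etaN at 1.
  rewrite (mu_char1 _ _ s (fun _ => t)).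
  - unfold Tm. rewrite <- c_eta_nat. apply f_equal, c_unit_l.
  - intros [z [n Hz]]. simpl. unfold single in Hz. congruence.
Qed.

Lemma unit_r {X : Type} (q : N X) : muN (mapN etaN q) = q.
Proof.
  destruct (N_ind q) as (s & t & ->). rewrite map_cl.
  rewrite (mu_char _ _ _ _ s (c_eta M)).
  - apply f_equal, c_unit_r.
  - intro z. rewrite cl_eta. reflexivity.
Qed.

Lemma assoc {X : Type} (Q : N (N (N X))) : muN (muN Q) = muN (mapN muN Q).
Proof.
  destruct (N_ind Q) as (s & t & ->). destruct (mu_exists s) as (V & g & Hg).
  destruct (mu_exists V) as (V2 & g2 & Hg2).
  rewrite (mu_char1 s t V g Hg), (mu_char1 V _ V2 g2 Hg2), map_cl.
  rewrite (mu_char _ _ _ _ V2 (fun z => c_mu M (Tm g2 (g z)))).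
  - f_equal. unfold Tm. rewrite <- c_mu_nat, c_assoc. f_equal.
    rewrite !cT_comp. reflexivity.
  - intro z. simpl. rewrite <- Hg. symmetry. apply mu_char1, Hg2.
Qed.

Definition NM : Monad :=
  {| mT := N; mT_map := @mapN; mT_id := @map_id; mT_comp := @map_comp;
     m_eta := @etaN; m_mu := @muN; m_eta_nat := @eta_nat; m_mu_nat := @mu_nat;
     m_unit_l := @unit_l; m_unit_r := @unit_r; m_assoc := @assoc |}.

(* comparison with M on countable sets *)
Definition enumT (Y : Type) (H : countable Y) : nat -> option Y :=
  let f := proj1_sig (constructive_indefinite_description _ H) in
  fun n => match excluded_middle_informative (exists y, f y = n) with
           | left e => Some (proj1_sig (constructive_indefinite_description _ e))
           | right _ => None end.

Lemma enumT_all (Y : Type) (H : countable Y) (y : Y) : Mem (enumT Y H) y.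
Proof.
  unfold enumT. destruct (constructive_indefinite_description _ H) as [f Hf]. simpl.
  exists (f y). destruct (excluded_middle_informative _) as [e | ne].
  - destruct (constructive_indefinite_description _ e) as [y' Hy']. simpl. f_equal. apply Hf, Hy'.
  - exfalso. apply ne. eauto.
Qed.

Definition enumC (X : CSet) := enumT X (cs_cnt X).
Definition toSub (X : CSet) (x : X) : CS (enumC X) := exist _ x (enumT_all X (cs_cnt X) x).

Definition alpha (X : CSet) (t : cT M X) : N X := cl (enumC X) (Tm (toSub X) t).

Lemma Tm_comp' {A B C : CSet} (f : A -> B) (g : B -> C) (h : A -> C) t :
  (forall a, g (f a) = h a) -> Tm g (Tm f t) = Tm h t.
Proof. intro H. rewrite Tm_comp. unfold Tm. f_equal. extensionality a. apply H. Qed.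

Definition betaRep (X : CSet) (r : Rep X) : cT M X :=
  Tm (fun p : CS (projT1 r) => proj1_sig p) (projT2 r).

Lemma betaRep_resp (X : CSet) r1 r2 : R r1 r2 -> betaRep X r1 = betaRep X r2.
Proof.
  intros (s3 & H1 & H2 & E). unfold betaRep.
  rewrite <- (Tm_comp' (inj H1) (fun p : CS s3 => proj1_sig p)) by reflexivity.
  rewrite E. apply Tm_comp'. reflexivity.
Qed.

Definition beta (X : CSet) (q : N X) : cT M X := liftN (betaRep X) q.

Lemma beta_cl (X : CSet) s t : beta X (cl s t) = Tm (fun p : CS s => proj1_sig p) t.
Proof. unfold beta, cl. rewrite liftN_cls. reflexivity. apply betaRep_resp. Qed.

Lemma beta_alpha (X : CSet) t : beta X (alpha X t) = t.
Proof. unfold alpha. rewrite beta_cl. rewrite (Tm_comp' _ _ (fun a => a)) by reflexivity. apply Tm_id. Qed.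

Lemma alpha_beta (X : CSet) q : alpha X (beta X q) = q.
Proof.
  destruct (N_ind q) as (s & t & ->). rewrite beta_cl. unfold alpha. rewrite Tm_comp.
  rewrite <- (Tm_id t) at 2. apply cl_eq_map. reflexivity.
Qed.

Lemma alpha_nat (X Y : CSet) (f : X -> Y) t : alpha Y (cT_map M f t) = mapN f (alpha X t).
Proof.
  unfold alpha. symmetry. rewrite (map_char f _ _ _ t (enumC Y) (fun x => toSub Y (f x)))
    by reflexivity.
  f_equal. symmetry. apply (Tm_comp f (toSub Y)).
Qed.

Lemma alpha_eta (X : CSet) (x : X) : alpha X (c_eta M x) = etaN x.
Proof. unfold alpha, Tm. rewrite <- c_eta_nat. apply cl_eta. Qed.

Lemma alpha_mu (X : CSet) t :
  alpha X (c_mu M t) = muN (mapN (alpha X) (alpha (cT M X) t)).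
Proof.
  unfold alpha at 3. rewrite map_cl, Tm_comp.
  rewrite (mu_char _ _ _ _ (enumC X) (fun z => Tm (toSub X) z)) by reflexivity.
  unfold alpha, Tm. rewrite c_mu_nat. reflexivity.
Qed.

Lemma ext1 : extends_set M NM.
Proof.
  exists alpha. split; [| split; [| split]].
  - intro X. exists (beta X). split; [apply beta_alpha | apply alpha_beta].
  - apply alpha_nat.
  - apply alpha_eta.
  - apply alpha_mu.
Qed.

End Ext.

Section Coal.
Context (M : cMonad) (B : Functor) (HB : countably_accessible B) (L : cLifting B M).

Definition pr {X : Type} (s : nat -> option X) (p : CS s) : X := proj1_sig p.

Lemma Fcomp {X Y Z : Type} (f : X -> Y) (g : Y -> Z) (h : X -> Z) x :
  (forall a, g (f a) = h a) -> F_map B g (F_map B f x) = F_map B h x.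
Proof. intro H. rewrite F_comp. f_equal. extensionality a. apply H. Qed.

Lemma Finj {A Y : Type} (f : A -> Y) (a0 : A) : injective f -> injective (F_map B f).
Proof.
  intros Hf b1 b2 E.
  pose (r := fun y => match excluded_middle_informative (exists a, f a = y) with
                      | left e => proj1_sig (constructive_indefinite_description _ e)
                      | right _ => a0 end).
  assert (Hr : forall a, r (f a) = a).
  { intro a. unfold r. destruct (excluded_middle_informative _) as [e | ne].
    - destruct (constructive_indefinite_description _ e) as [a' Ha']. simpl. apply Hf, Ha'.
    - exfalso; eauto. }
  rewrite <- (F_id B A b1), <- (F_id B A b2).
  rewrite <- (Fcomp f r (fun a => a) b1 Hr), <- (Fcomp f r (fun a => a) b2 Hr), E.
  reflexivity.
Qed.

Lemma pr_inj {X : Type} (s : nat -> option X) : injective (pr s).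
Proof. intros a b E. apply sub_eq, E. Qed.

Definition closed {X : Type} (c : X -> B X) (s : nat -> option X) : Prop :=
  forall p : CS s, exists b : B (CS s), F_map B (pr s) b = c (pr s p).

Definition cstr {X : Type} (c : X -> B X) (s : nat -> option X) (Hc : closed c s)
  (p : CS s) : B (CS s) := proj1_sig (constructive_indefinite_description _ (Hc p)).

Lemma cstr_spec {X : Type} (c : X -> B X) s Hc p : F_map B (pr s) (cstr c s Hc p) = c (pr s p).
Proof. unfold cstr. destruct (constructive_indefinite_description _ _). auto. Qed.

Definition CC {X : Type} (c : X -> B X) (s : nat -> option X) (Hc : closed c s) : CCoalg B :=
  {| cc_car := CS s; cc_str := cstr c s Hc |}.

Lemma hom_sub {X Y : Type} (c : X -> B X) (d : Y -> B Y) (h : X -> Y) (Hh : is_hom c d h)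
  s Hc s' Hc' (hs : CS s -> CS s') :
  (forall p, pr s' (hs p) = h (pr s p)) -> is_hom (cstr c s Hc) (cstr d s' Hc') hs.
Proof.
  intros E p. apply (Finj (pr s') (hs p) (pr_inj s')).
  rewrite (Fcomp hs (pr s') (fun a => h (pr s a))) by apply E.
  rewrite cstr_spec, <- (Fcomp (pr s) h) by reflexivity.
  rewrite cstr_spec, E. apply Hh.
Qed.

Lemma supp_ex {X : Type} (c : X -> B X) (x : X) :
  exists s0, exists b : B (CS s0), F_map B (pr s0) b = c x.
Proof.
  destruct (HB X (c x)) as (Y & i & HY & _ & y & Hy).
  exists (fim i (enumT Y HY)).
  exists (F_map B (fun y => fsub i _ (exist _ y (enumT_all Y HY y))) y).
  rewrite F_comp. exact Hy.
Qed.

Definition supp {X : Type} (c : X -> B X) (x : X) : nat -> option X :=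
  proj1_sig (constructive_indefinite_description _ (supp_ex c x)).

Lemma supp_spec {X : Type} (c : X -> B X) (x : X) :
  exists b : B (CS (supp c x)), F_map B (pr _) b = c x.
Proof. unfold supp. destruct (constructive_indefinite_description _ _). auto. Qed.

Definition next {X : Type} (c : X -> B X) (s : nat -> option X) : nat -> option X :=
  union s (bigU (fun n => match s n with Some x => supp c x | None => fun _ => None end)).

Definition chain {X : Type} (c : X -> B X) (s : nat -> option X) (k : nat) := Nat.iter k (next c) s.

Lemma bigU_mem {X : Type} (ss : nat -> nat -> option X) x : Mem (bigU ss) x -> exists k, Mem (ss k) x.
Proof.
  intros [n Hn]. unfold bigU in Hn. destruct (of_nat n) as [a b]. exists a, b. exact Hn.
Qed.

Lemma closure {X : Type} (c : X -> B X) (s : nat -> option X) :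
  exists s', Incl s s' /\ closed c s'.
Proof.
  exists (bigU (chain c s)). split.
  - apply (bigU_incl (chain c s) 0).
  - intros [x Hx]. unfold pr; simpl.
    destruct (bigU_mem _ _ Hx) as [k Hk].
    assert (Hs : Incl (supp c x) (bigU (chain c s))).
    { intros y Hy. apply (bigU_incl (chain c s) (S k)). simpl. unfold next.
      apply union_r. destruct Hk as [n Hn].
      apply (bigU_incl (fun n => match chain c s k n with Some x => supp c x | None => fun _ => None end) n).
      rewrite Hn. exact Hy. }
    destruct (supp_spec c x) as [b Hb].
    exists (F_map B (inj Hs) b). rewrite <- Hb. apply Fcomp. reflexivity.
Qed.

Definition strRepCl {X : Type} (c : X -> B X) s (Hc : closed c s) (t : cT M (CS s)) : B (N M X) :=
  F_map B (cl M s) (lstr L (CC c s Hc) t).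

Lemma strRep_push {X : Type} (c : X -> B X) s Hc s' Hc' (H : Incl s s') t :
  strRepCl c s Hc t = strRepCl c s' Hc' (Tm M (inj H) t).
Proof.
  unfold strRepCl.
  assert (Hh : is_hom (cstr c s Hc) (cstr c s' Hc') (inj H)).
  { apply (hom_sub c c (fun a => a)); [ intro x; apply F_id | reflexivity ]. }
  pose proof (lmap_hom B M L (CC c s Hc) (CC c s' Hc') (inj H) Hh t) as E.
  transitivity (F_map B (cl M s') (F_map B (cT_map M (inj H)) (lstr L (CC c s Hc) t))).
  { symmetry. apply Fcomp. intro a. apply cl_inj. }
  exact (f_equal _ E).
Qed.

Lemma str_inv {X : Type} (c : X -> B X) s1 Hc1 t1 s2 Hc2 t2 :
  cl M s1 t1 = cl M s2 t2 -> strRepCl c s1 Hc1 t1 = strRepCl c s2 Hc2 t2.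
Proof.
  intro E. destruct (cls_eq_inv M _ _ E) as (s3 & H1 & H2 & E3). simpl in *.
  destruct (closure c s3) as (s4 & H34 & Hc4).
  rewrite (strRep_push c s1 Hc1 s4 Hc4 (Incl_trans _ _ _ H1 H34)).
  rewrite (strRep_push c s2 Hc2 s4 Hc4 (Incl_trans _ _ _ H2 H34)).
  f_equal.
  rewrite <- (Tm_coh M _ (inj H1) (inj H34)) by reflexivity.
  rewrite E3. apply Tm_coh. reflexivity.
Qed.

Definition strN {X : Type} (c : X -> B X) (q : N M X) : B (N M X) :=
  let r := rep M q in
  let e := constructive_indefinite_description _ (closure c (projT1 r)) in
  strRepCl c (proj1_sig e) (proj2 (proj2_sig e)) (Tm M (inj (proj1 (proj2_sig e))) (projT2 r)).

Lemma strN_cl {X : Type} (c : X -> B X) s Hc t : strN c (cl M s t) = strRepCl c s Hc t.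
Proof.
  unfold strN. destruct (constructive_indefinite_description _ _) as [s' [Hi Hc']]. simpl.
  apply str_inv. rewrite cl_inj, <- cls_cl. apply rep_spec.
Qed.

Lemma N_ind_cl {X : Type} (c : X -> B X) (q : N M X) :
  exists s (Hc : closed c s) t, q = cl M s t.
Proof.
  destruct (N_ind M q) as (s & t & ->). destruct (closure c s) as (s' & Hi & Hc).
  exists s', Hc, (Tm M (inj Hi) t). symmetry. apply cl_inj.
Qed.

Lemma cl_injective {X : Type} (V : nat -> option X) :
  (inhabited (CS V) \/ ~ inhabited X) -> injective (cl M V).
Proof.
  intros Hinh u1 u2 E. destruct (cls_eq_inv M _ _ E) as (s3 & H1 & H2 & E3). simpl in *.
  assert (inj H2 = inj H1) as Eh by (extensionality p; apply sub_eq; reflexivity).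
  rewrite Eh in E3.
  assert (exists r : CS s3 -> CS V, forall p, r (inj H1 p) = p) as [r Hr].
  { destruct Hinh as [[p0] | nX].
    - exists (fun w => match excluded_middle_informative (Mem V (proj1_sig w)) with
                       | left H => exist _ (proj1_sig w) H | right _ => p0 end).
      intro p. destruct (excluded_middle_informative _) as [H | n].
      + apply sub_eq. reflexivity.
      + exfalso. apply n, (proj2_sig p).
    - exists (fun w => False_rect _ (nX (inhabits (proj1_sig w)))).
      intro p. exfalso. apply nX. exact (inhabits (proj1_sig p)). }
  rewrite <- (Tm_id M u1), <- (Tm_id M u2).
  rewrite <- (Tm_comp' M (inj H1) r (fun a => a) u1 Hr).
  rewrite <- (Tm_comp' M (inj H1) r (fun a => a) u2 Hr).
  rewrite E3. reflexivity.
Qed.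

Lemma map_hom {X Y : Type} (c : X -> B X) (d : Y -> B Y) (h : X -> Y) (Hh : is_hom c d h) :
  is_hom (strN c) (strN d) (mapN M h).
Proof.
  intro q. destruct (N_ind_cl c q) as (s & Hc & t & ->).
  assert (Hc' : closed d (fim h s)).
  { intros p'. destruct (proj2_sig p') as [n Hn]. unfold fim in Hn.
    destruct (s n) as [x|] eqn:Esn; simpl in Hn; [| discriminate]. injection Hn as Hy.
    destruct (Hc (exist _ x (ex_intro _ n Esn))) as [b Hb].
    exists (F_map B (fsub h s) b). unfold pr in *; simpl in *.
    transitivity (d (h x)); [| f_equal; exact Hy].
    rewrite <- Hh, <- Hb, !F_comp. reflexivity. }
  rewrite map_cl, (strN_cl d _ Hc'), (strN_cl c _ Hc). unfold strRepCl.
  assert (Hhs : is_hom (cstr c s Hc) (cstr d _ Hc') (fsub h s)).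
  { apply (hom_sub c d h Hh). reflexivity. }
  pose proof (lmap_hom B M L (CC c s Hc) (CC d _ Hc') (fsub h s) Hhs t) as E.
  transitivity (F_map B (cl M (fim h s)) (F_map B (cT_map M (fsub h s)) (lstr L (CC c s Hc) t))).
  { rewrite !F_comp. f_equal. extensionality a. apply map_cl. }
  exact (f_equal _ E).
Qed.

Lemma eta_hom {X : Type} (c : X -> B X) : is_hom c (strN c) (etaN M).
Proof.
  intro x. destruct (closure c (single x)) as (s & Hi & Hc).
  pose (u := inj Hi (pt x)).
  assert (Ex : etaN M x = cl M s (c_eta M u)) by (rewrite cl_eta; reflexivity).
  rewrite Ex, (strN_cl c s Hc). unfold strRepCl.
  pose proof (leta_hom B M L (CC c s Hc) u) as E.
  transitivity (F_map B (cl M s) (F_map B (@c_eta M (CS s)) (cstr c s Hc u)));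
    [| exact (f_equal _ E)].
  transitivity (F_map B (etaN M) (F_map B (pr s) (cstr c s Hc u))).
  { rewrite cstr_spec. reflexivity. }
  rewrite !F_comp. f_equal. extensionality v. symmetry. apply cl_eta.
Qed.

Lemma mu_hom {X : Type} (c : X -> B X) : is_hom (strN (strN c)) (strN c) (muN M).
Proof.
  intro Q. destruct (N_ind_cl (strN c) Q) as (s & Hs & t & ->).
  destruct (mu_exists M s) as (V & g & Hg).
  assert (exists V1 (i : Incl V V1), inhabited (CS V1) \/ ~ inhabited X) as (V1 & i & Hinh).
  { destruct (classic (inhabited X)) as [[x0] | nX].
    - exists (union V (single x0)), (union_l _ _). left. constructor.
      exact (exist _ x0 (union_r V (single x0) x0 (ex_intro _ 0 eq_refl))).
    - exists V, (Incl_refl V). right. exact nX. }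
  destruct (closure c V1) as (V2 & Hi2 & Hc2).
  assert (Hinh2 : inhabited (CS V2) \/ ~ inhabited X).
  { destruct Hinh as [[p] | nX]; [left; constructor; exact (inj Hi2 p) | right; exact nX]. }
  pose (g2 := fun z => Tm M (inj (Incl_trans _ _ _ i Hi2)) (g z)).
  assert (Hg2 : forall z, cl M V2 (g2 z) = proj1_sig z).
  { intro z. unfold g2. rewrite cl_inj. apply Hg. }
  assert (Hhom : is_hom (cstr (strN c) s Hs) (lstr L (CC c V2 Hc2)) g2).
  { intro p. apply (Finj (cl M V2) (g2 p) (cl_injective V2 Hinh2)).
    rewrite (Fcomp g2 (cl M V2) (pr s)) by apply Hg2.
    rewrite cstr_spec. unfold pr at 1. rewrite <- Hg2, (strN_cl c V2 Hc2). reflexivity. }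
  rewrite (mu_char1 M s t V2 g2 Hg2), (strN_cl (strN c) s Hs t), (strN_cl c V2 Hc2).
  unfold strRepCl.
  pose proof (lmu_hom B M L (CC c V2 Hc2) (Tm M g2 t)) as E1.
  pose proof (lmap_hom B M L (CC (strN c) s Hs)
    {| cc_car := cT M (CS V2); cc_str := lstr L (CC c V2 Hc2) |} g2 Hhom t) as E2.
  transitivity (F_map B (cl M V2) (F_map B (c_mu M)
     (F_map B (cT_map M g2) (lstr L (CC (strN c) s Hs) t)))).
  { rewrite !F_comp. f_equal. extensionality a. apply mu_char1, Hg2. }
  transitivity (F_map B (cl M V2) (F_map B (c_mu M)
     (lstr L {| cc_car := cT M (CS V2); cc_str := lstr L (CC c V2 Hc2) |} (cT_map M g2 t)))).
  - f_equal. f_equal. exact E2.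
  - f_equal. exact E1.
Qed.

Definition bTC (C : Coalg B) : Coalg B := {| car := N M (car C); str := strN (str C) |}.
Definition bTm (C D : Coalg B) (h : CHom C D) : CHom (bTC C) (bTC D) :=
  Build_CHom B (bTC C) (bTC D) (mapN M (hfun h)) (map_hom (str C) (str D) (hfun h) (hhom h)).
Definition bEta (C : Coalg B) : CHom C (bTC C) :=
  Build_CHom B C (bTC C) (etaN M) (eta_hom (str C)).
Definition bMu (C : Coalg B) : CHom (bTC (bTC C)) (bTC C) :=
  Build_CHom B (bTC (bTC C)) (bTC C) (muN M) (mu_hom (str C)).

Definition PM : CoalgMonad B :=
  {| bT := bTC; bT_map := bTm;
     bT_id := fun C t => map_id M t;
     bT_comp := fun C D E f g t => map_comp M (hfun f) (hfun g) t;
     b_eta := bEta; b_mu := bMu;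
     b_eta_nat := fun C D f x => eta_nat M (hfun f) x;
     b_mu_nat := fun C D f t => mu_nat M (hfun f) t;
     b_unit_l := fun C t => unit_l M t;
     b_unit_r := fun C t => unit_r M t;
     b_assoc := fun C t => assoc M t |}.

Lemma closed_enum (C : CCoalg B) : closed (cc_str C) (enumC (cc_car C)).
Proof.
  intro p. exists (F_map B (toSub (cc_car C)) (cc_str C (pr _ p))).
  rewrite F_comp. apply F_id.
Qed.

Lemma toSub_hom (C : CCoalg B) Hc :
  is_hom (cc_str C) (cstr (cc_str C) (enumC (cc_car C)) Hc) (toSub (cc_car C)).
Proof.
  intro x. apply (Finj (pr _) (toSub _ x) (pr_inj _)).
  rewrite cstr_spec, F_comp. apply F_id.
Qed.

Lemma alpha_hom (C : CCoalg B) : is_hom (lstr L C) (strN (cc_str C)) (alpha M (cc_car C)).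
Proof.
  intro t. pose proof (closed_enum C) as Hc. unfold alpha.
  rewrite (strN_cl _ _ Hc). unfold strRepCl.
  pose proof (lmap_hom B M L C (CC _ _ Hc) (toSub (cc_car C)) (toSub_hom C Hc) t) as E.
  transitivity (F_map B (cl M (enumC (cc_car C)))
    (F_map B (cT_map M (toSub (cc_car C))) (lstr L C t))).
  { rewrite F_comp. reflexivity. }
  exact (f_equal _ E).
Qed.

Definition alphaH (C : CCoalg B) : CHom (Ibar (Tbarc L C)) (bTC (Ibar C)) :=
  Build_CHom B (Ibar (Tbarc L C)) (bTC (Ibar C)) (alpha M (cc_car C)) (alpha_hom C).

Lemma beta_hom (C : CCoalg B) : is_hom (strN (cc_str C)) (lstr L C) (beta M (cc_car C)).
Proof.
  intro q. rewrite <- (alpha_beta M _ q) at 1. rewrite <- (alpha_hom C).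
  rewrite (Fcomp _ _ (fun a => a)) by apply beta_alpha. apply F_id.
Qed.

Lemma ext2 : extends_coalg L PM.
Proof.
  exists alphaH. split; [| split; [| split]].
  - intro C. exists (Build_CHom B (bTC (Ibar C)) (Ibar (Tbarc L C)) (beta M (cc_car C)) (beta_hom C)).
    split; intros; [apply beta_alpha | apply alpha_beta].
  - intros C D h t. apply alpha_nat.
  - intros C x. apply alpha_eta.
  - intros C t. apply alpha_mu.
Qed.

Lemma lifts3 : lifts_upto_iso (NM M) PM.
Proof.
  exists (fun C (t : car (bT PM C)) => (t : NM M (car C))). split; [| split; [| split]].
  - intro C. exists (fun t => t). split; reflexivity.
  - intros; reflexivity.
  - intros; reflexivity.
  - intros C t. simpl. rewrite map_id. reflexivity.
Qed.

End Coal.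

Theorem mainTheorem13 (B : Functor) (HB : countably_accessible B)
  (M : cMonad) (L : cLifting B M) :
  exists (N : Monad) (P : CoalgMonad B),
    extends_set M N /\ extends_coalg L P /\ lifts_upto_iso N P.
Proof.
  exists (NM M), (PM M B HB L). split; [apply ext1 | split; [apply ext2 | apply lifts3]].
Qed.
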